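(* Let $g_1(s),\dots,g_n(s)$ and $f(s)$ be rational transfer functions such that there is $\gamma>0$ with $\mathrm{Re}(g_i(s))\ge\frac1\gamma|g_i(s)|^2$ for all $\mathrm{Re}(s)>0$ and all $i$, $f$ is positive real ($\mathrm{Re}(f(s))>0$ for $\mathrm{Re}(s)>0$, $\mathrm{Im}(f(s))=0$ for $\mathrm{Re}(s)=0$), and for every $\eta>0$, $M(\eta):=\sup_{s\in(-j\eta,+j\eta)}\max_i|g_i^{-1}(s)|$ is finite. Let $V_k,\hat V_k\in\mathbb{R}^{n\times k}$ with $V_k^TV_k=\hat V_k^T\hat V_k=I$ and let $\Lambda_k\succeq0$ be symmetric. Define $$T_k(s)=V_k(V_k^T\mathrm{diag}\{g_i^{-1}(s)\}V_k+f(s)\Lambda_k)^{-1}V_k^T,\quad \hat T_k(s)=\hat V_k(\hat V_k^T\mathrm{diag}\{g_i^{-1}(s)\}\hat V_k+f(s)\Lambda_k)^{-1}\hat V_k^T.$$ Then for any $\eta>0$, $$\sup_{s\in(-j\eta,+j\eta)}\|T_k(s)-\hat T_k(s)\|\le2(\gamma+\gamma^2M(\eta))\|V_k-\hat V_k\|_F.$$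
   Context: $\|\cdot\|$ is the spectral norm and $\|\cdot\|_F$ the Frobenius norm; $s\in(-j\eta,+j\eta)$ means $s=j\omega$ with $|\omega|<\eta$. *)

(* Defs.v *)
From HB Require Import structures.
From mathcomp Require Import all_boot all_order all_algebra.
From mathcomp Require Import classical_sets reals.
From mathcomp.real_closed Require Import complex.
Set Implicit Arguments. Unset Strict Implicit. Unset Printing Implicit Defensive.
Import Order.TTheory GRing.Theory Num.Theory.
Local Open Scope ring_scope.

Section Defs.
Variable R : realType.
Local Notation C := R[i].

Definition cabs (z : C) : R := Num.sqrt (complex.Re z ^+ 2 + complex.Im z ^+ 2).

Definition vnorm m (x : 'cV[C]_m) : R :=
  Num.sqrt (\sum_(i < m) cabs (x i 0) ^+ 2).

Definition specnorm m n (A : 'M[C]_(m, n)) : R :=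
  sup [set vnorm (A *m x) | x in [set x : 'cV[C]_n | vnorm x <= 1]]%classic.

Definition frobnorm m n (A : 'M[R]_(m, n)) : R :=
  Num.sqrt (\sum_(i < m) \sum_(j < n) A i j ^+ 2).

(** A rational transfer function with real coefficients, given as a
    coprime numerator/denominator pair (denominator nonzero). *)
Record ratfun := RatFun { num : {poly R}; den : {poly R} }.

Definition wf_ratfun (g : ratfun) : Prop :=
  den g != 0 /\ coprimep (num g) (den g).

Definition peval (p : {poly R}) (s : C) : C := (map_poly (real_complex R) p).[s].

(** value g(s) (with the library convention x/0 = 0 at poles) *)
Definition reval (g : ratfun) (s : C) : C := peval (num g) s / peval (den g) s.

Definition rinv_eval (g : ratfun) (s : C) : C := peval (den g) s / peval (num g) s.

Definition jw (w : R) : C := Complex 0 w.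

(** M(eta) is finite: g_i^{-1} has no pole on the segment and is bounded there *)
Definition M_finite n (g : 'I_n -> ratfun) : Prop :=
  forall eta : R, 0 < eta -> exists B : R, forall (i : 'I_n) (w : R), `|w| < eta ->
    peval (num (g i)) (jw w) != 0 /\ cabs (rinv_eval (g i) (jw w)) <= B.

Definition Mval n (g : 'I_n -> ratfun) (eta : R) : R :=
  sup [set cabs (rinv_eval (g iw.1) (jw iw.2))
         | iw in [set iw : 'I_n * R | `|iw.2| < eta]]%classic.

Definition Tmat n k (g : 'I_n -> ratfun) (f : ratfun) (V : 'M[R]_(n, k))
    (L : 'M[R]_k) (s : C) : 'M[C]_n :=
  let Vc := map_mx (real_complex R) V in
  Vc *m invmx (Vc^T *m diag_mx (\row_i rinv_eval (g i) s) *m Vc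
               + reval f s *: map_mx (real_complex R) L) *m Vc^T.
End Defs.

(* Main.v *)
Require Import Defs.
From HB Require Import structures.
From mathcomp Require Import all_boot all_order all_algebra.
From mathcomp Require Import classical_sets reals.
From mathcomp.real_closed Require Import complex.
From mathcomp Require Import boolp.
From mathcomp.real_closed Require Import polyrcf.
From mathcomp Require Import ring lra.
Import Order.TTheory GRing.Theory Num.Theory.
Set Implicit Arguments. Unset Strict Implicit. Unset Printing Implicit Defensive.
Local Open Scope ring_scope.

Section S.
Local Open Scope complex_scope.
Variable R : realType.
Local Notation C := R[i].
Local Notation Re := (@complex.Re R).
Local Notation Im := (@complex.Im R).

Lemma cE (x y : C) : Re x = Re y -> Im x = Im y -> x = y.
Proof. by case: x => a b; case: y => c d /= -> ->. Qed.
Lemma ReD (x y : C) : Re (x + y) = Re x + Re y. Proof. by case: x; case: y. Qed.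
Lemma ImD (x y : C) : Im (x + y) = Im x + Im y. Proof. by case: x; case: y. Qed.
Lemma ReN (x : C) : Re (- x) = - Re x. Proof. by case: x. Qed.
Lemma ImN (x : C) : Im (- x) = - Im x. Proof. by case: x. Qed.
Lemma ReM (x y : C) : Re (x * y) = Re x * Re y - Im x * Im y. Proof. by case: x; case: y. Qed.
Lemma ImM (x y : C) : Im (x * y) = Re x * Im y + Im x * Re y. Proof. by case: x; case: y. Qed.
Lemma ReV (x : C) : Re (x^-1) = Re x / (Re x ^+ 2 + Im x ^+ 2). Proof. by case: x. Qed.
Lemma ImV (x : C) : Im (x^-1) = - (Im x / (Re x ^+ 2 + Im x ^+ 2)). Proof. by case: x. Qed.
Lemma Re0 : Re 0 = 0. Proof. by []. Qed.
Lemma Im0 : Im 0 = 0. Proof. by []. Qed.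
Lemma ReC (r : R) : Re r%:C = r. Proof. by []. Qed.
Lemma ImC (r : R) : Im r%:C = 0. Proof. by []. Qed.
Lemma Re_sum I (r : seq I) (P : pred I) (F : I -> C) :
  Re (\sum_(i <- r | P i) F i) = \sum_(i <- r | P i) Re (F i).
Proof. by elim/big_rec2: _ => // i y1 y2 _ <-; rewrite ReD. Qed.
Lemma Im_sum I (r : seq I) (P : pred I) (F : I -> C) :
  Im (\sum_(i <- r | P i) F i) = \sum_(i <- r | P i) Im (F i).
Proof. by elim/big_rec2: _ => // i y1 y2 _ <-; rewrite ImD. Qed.
Lemma cabs_sq (z : C) : cabs z ^+ 2 = Re z ^+ 2 + Im z ^+ 2.
Proof. by rewrite /cabs sqr_sqrtr // addr_ge0 // sqr_ge0. Qed.
Lemma cabs_ge0 (z : C) : 0 <= cabs z. Proof. exact: sqrtr_ge0. Qed.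

Lemma CS_gen0 (S a b : R) : 0 <= a -> 0 <= b ->
  (forall t, 0 < t -> 2 * t * S <= t ^+ 2 * a ^+ 2 + b ^+ 2) -> S <= a * b.
Proof.
move=> a0 b0 H.
have [a_eq0|a_gt0] := eqVneq a 0.
  rewrite a_eq0 mul0r; rewrite leNgt; apply/negP => S0.
  have := H ((b ^+ 2 + 1) / S) (divr_gt0 (ltr_wpDl (sqr_ge0 b) ltr01) S0).
  rewrite a_eq0 expr0n /= mulr0 add0r.
  have -> : 2 * ((b ^+ 2 + 1) / S) * S = 2 * (b ^+ 2 + 1) by field; rewrite gt_eqF.
  have := sqr_ge0 b; lra.
have a_pos : 0 < a by rewrite lt_def a_gt0 a0.
have [b_eq0|b_gt0] := eqVneq b 0.
  rewrite b_eq0 mulr0 leNgt; apply/negP => S0.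
  have := H (S / a ^+ 2) (divr_gt0 S0 (exprn_gt0 _ a_pos)).
  rewrite b_eq0 expr0n /= addr0.
  have a2 : a ^+ 2 != 0 by rewrite expf_neq0.
  have -> : (S / a ^+ 2) ^+ 2 * a ^+ 2 = S * (S / a ^+ 2) by field.
  have t0 : 0 < S / a ^+ 2 by rewrite divr_gt0 ?exprn_gt0.
  move: t0; set t := S / a ^+ 2 => t0 h.
  have : 0 < t * S by rewrite mulr_gt0.
  nra.
have b_pos : 0 < b by rewrite lt_def b_gt0 b0.
have := H (b / a) (divr_gt0 b_pos a_pos).
have -> : (b / a) ^+ 2 * a ^+ 2 + b ^+ 2 = (2 * (b / a)) * (a * b) by field.
have t0 : 0 < 2 * (b / a) by rewrite mulr_gt0 // divr_gt0.
move: t0; set t := 2 * (b / a) => t0 h.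
by rewrite -(ler_pM2l t0).
Qed.

Lemma CS_gen (S A B : R) : 0 <= A -> 0 <= B ->
  (forall t, 0 < t -> 2 * t * S <= t ^+ 2 * A + B) -> S <= Num.sqrt A * Num.sqrt B.
Proof.
move=> A0 B0 H; apply: CS_gen0; rewrite ?sqrtr_ge0 // => t t0.
by rewrite !sqr_sqrtr //; apply: H.
Qed.

Definition nsq m (x : 'cV[C]_m) : R := \sum_i (Re (x i 0) ^+ 2 + Im (x i 0) ^+ 2).
Definition rdot m (x y : 'cV[C]_m) : R := \sum_i (Re (x i 0) * Re (y i 0) + Im (x i 0) * Im (y i 0)).

Lemma nsq_ge0 m (x : 'cV[C]_m) : 0 <= nsq x.
Proof. by apply: sumr_ge0 => i _; rewrite addr_ge0 ?sqr_ge0. Qed.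

Lemma vnormE m (x : 'cV[C]_m) : vnorm x = Num.sqrt (nsq x).
Proof. by rewrite /vnorm /nsq; congr Num.sqrt; apply: eq_bigr => i _; rewrite cabs_sq. Qed.

Lemma vnorm_ge0 m (x : 'cV[C]_m) : 0 <= vnorm x.
Proof. exact: sqrtr_ge0. Qed.

Lemma vnorm_sq m (x : 'cV[C]_m) : vnorm x ^+ 2 = nsq x.
Proof. by rewrite vnormE sqr_sqrtr // nsq_ge0. Qed.

Lemma CS m (x y : 'cV[C]_m) : rdot x y <= vnorm x * vnorm y.
Proof.
rewrite !vnormE; apply: CS_gen; rewrite ?nsq_ge0 // => t t0.
rewrite /rdot /nsq mulr_sumr mulr_sumr -big_split /=; apply: ler_sum => i _.
set a := Re (x i 0); set b := Im (x i 0); set c := Re (y i 0); set d := Im (y i 0).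
have := sqr_ge0 (t * a - c); have := sqr_ge0 (t * b - d); nra.
Qed.

Lemma nsqD m (x y : 'cV[C]_m) : nsq (x + y) = nsq x + nsq y + 2 * rdot x y.
Proof.
rewrite /nsq /rdot mulr_sumr -!big_split /=; apply: eq_bigr => i _.
rewrite !mxE ReD ImD; ring.
Qed.

Lemma nsqN m (x : 'cV[C]_m) : nsq (- x) = nsq x.
Proof. by apply: eq_bigr => i _; rewrite !mxE ReN ImN !sqrrN. Qed.

Lemma vnormD m (x y : 'cV[C]_m) : vnorm (x + y) <= vnorm x + vnorm y.
Proof.
rewrite -(ger0_norm (addr_ge0 (vnorm_ge0 x) (vnorm_ge0 y))) -sqrtr_sqr.
rewrite vnormE ler_sqrt ?sqr_ge0 // nsqD sqrrD !vnorm_sq.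
have := CS x y; lra.
Qed.

Lemma vnormN m (x : 'cV[C]_m) : vnorm (- x) = vnorm x.
Proof. by rewrite !vnormE nsqN. Qed.

Definition bnd m p (A : 'M[C]_(m, p)) (c : R) := forall x, vnorm (A *m x) <= c * vnorm x.

Lemma bndD m p (A B : 'M[C]_(m, p)) a b : bnd A a -> bnd B b -> bnd (A + B) (a + b).
Proof.
move=> hA hB x; rewrite mulmxDl mulrDl; apply: le_trans (vnormD _ _) _.
exact: lerD.
Qed.

Lemma bndN m p (A : 'M[C]_(m, p)) a : bnd A a -> bnd (- A) a.
Proof. by move=> hA x; rewrite mulNmx vnormN. Qed.

Lemma bndB m p (A B : 'M[C]_(m, p)) a b : bnd A a -> bnd B b -> bnd (A - B) (a + b).
Proof. by move=> hA hB; apply: bndD => //; apply: bndN. Qed.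

Lemma bndM m p q (A : 'M[C]_(m, p)) (B : 'M[C]_(p, q)) a b :
  0 <= a -> bnd A a -> bnd B b -> bnd (A *m B) (a * b).
Proof.
move=> a0 hA hB x; rewrite -mulmxA; apply: le_trans (hA _) _.
by rewrite -mulrA ler_wpM2l.
Qed.

Lemma bnd_eq m p (A : 'M[C]_(m, p)) a b : a = b -> bnd A a -> bnd A b.
Proof. by move=> ->. Qed.

Lemma bnd_nsq m p (A : 'M[C]_(m, p)) c : 0 <= c ->
  (forall x, nsq (A *m x) <= c ^+ 2 * nsq x) -> bnd A c.
Proof.
move=> c0 H x; rewrite !vnormE -(ger0_norm c0) -sqrtr_sqr -sqrtrM ?sqr_ge0 //.
by rewrite ler_sqrt ?mulr_ge0 ?sqr_ge0 ?nsq_ge0.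
Qed.

Lemma bnd_spec m p (A : 'M[C]_(m, p)) c : 0 <= c -> bnd A c -> specnorm A <= c.
Proof.
move=> c0 hA; apply: ge_sup.
  exists (vnorm (A *m 0)); exists 0 => //=.
  by rewrite vnormE /nsq big1 ?sqrtr0 // => i _; rewrite mxE expr0n /= addr0.
move=> _ [x /= x1 <-]; apply: le_trans (hA x) _.
by rewrite -[leRHS]mulr1 ler_wpM2l.
Qed.


Definition re_v m (x : 'cV[C]_m) : 'cV[R]_m := \col_i Re (x i 0).
Definition im_v m (x : 'cV[C]_m) : 'cV[R]_m := \col_i Im (x i 0).
Definition rn m (a : 'cV[R]_m) : R := \sum_i a i 0 ^+ 2.
Local Notation mapC A := (map_mx (real_complex R) A).

Lemma rn_ge0 m (a : 'cV[R]_m) : 0 <= rn a.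
Proof. by apply: sumr_ge0 => i _; rewrite sqr_ge0. Qed.

Lemma rnE m (a : 'cV[R]_m) : rn a = (a^T *m a) 0 0.
Proof. by rewrite mxE; apply: eq_bigr => i _; rewrite mxE expr2. Qed.

Lemma nsq_split m (x : 'cV[C]_m) : nsq x = rn (re_v x) + rn (im_v x).
Proof. by rewrite /nsq /rn -big_split; apply: eq_bigr => i _; rewrite !mxE. Qed.

Lemma re_map m p (A : 'M[R]_(m, p)) x : re_v (mapC A *m x) = A *m re_v x.
Proof.
apply/matrixP => i j; rewrite !mxE Re_sum; apply: eq_bigr => l _.
by rewrite !mxE ReM ReC ImC mul0r subr0.
Qed.

Lemma im_map m p (A : 'M[R]_(m, p)) x : im_v (mapC A *m x) = A *m im_v x.
Proof.
apply/matrixP => i j; rewrite !mxE Im_sum; apply: eq_bigr => l _.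
by rewrite !mxE ImM ReC ImC mul0r addr0.
Qed.

Definition rb m p (A : 'M[R]_(m, p)) c := forall a, rn (A *m a) <= c ^+ 2 * rn a.

Lemma rb_bnd m p (A : 'M[R]_(m, p)) c : 0 <= c -> rb A c -> bnd (mapC A) c.
Proof.
move=> c0 h; apply: bnd_nsq => // x.
by rewrite !nsq_split re_map im_map mulrDr lerD.
Qed.

Lemma rb_orth m p (V : 'M[R]_(m, p)) : V^T *m V = 1%:M -> rb V 1.
Proof.
move=> VV a; rewrite expr1n mul1r !rnE trmx_mul -!mulmxA (mulmxA V^T) VV.
by rewrite mul1mx.
Qed.

Lemma rb_orthT m p (V : 'M[R]_(m, p)) : V^T *m V = 1%:M -> rb V^T 1.
Proof.
move=> VV y; rewrite expr1n mul1r.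
pose P := V *m V^T.
have PT : P^T = P by rewrite /P trmx_mul trmxK.
have PP : P *m P = P by rewrite /P mulmxA -(mulmxA V) VV mulmx1.
have QQ : (1%:M - P)^T *m (1%:M - P) = 1%:M - P.
  by rewrite [(1%:M - P)^T]raddfB /= trmx1 PT mulmxBl !mulmxBr !mul1mx mulmx1 PP subrr subr0.
have : 0 <= rn ((1%:M - P) *m y) by apply: rn_ge0.
rewrite !rnE trmx_mul -(mulmxA y^T) (mulmxA _ (1%:M - P)) QQ mulmxBl mul1mx mulmxBr.
have -> : (V^T *m y)^T *m (V^T *m y) = y^T *m (P *m y).
  by rewrite trmx_mul trmxK /P !mulmxA.
set u := y^T *m y; set v := y^T *m (P *m y).
have -> : (u - v) 0 0 = u 0 0 - v 0 0 by rewrite !mxE.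
by rewrite subr_ge0.
Qed.

Lemma real_CS m (u v : 'I_m -> R) :
  (\sum_i u i * v i) ^+ 2 <= (\sum_i u i ^+ 2) * (\sum_i v i ^+ 2).
Proof.
have hA : 0 <= \sum_i u i ^+ 2 by apply: sumr_ge0 => i _; apply: sqr_ge0.
have hB : 0 <= \sum_i v i ^+ 2 by apply: sumr_ge0 => i _; apply: sqr_ge0.
have h1 : \sum_i u i * v i <= Num.sqrt (\sum_i u i ^+ 2) * Num.sqrt (\sum_i v i ^+ 2).
  apply: CS_gen => // t t0; rewrite mulr_sumr mulr_sumr -big_split /=; apply: ler_sum => i _.
  have := sqr_ge0 (t * u i - v i); nra.
have h2 : - \sum_i u i * v i <= Num.sqrt (\sum_i u i ^+ 2) * Num.sqrt (\sum_i v i ^+ 2).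
  apply: CS_gen => // t t0; rewrite mulrN mulr_sumr mulr_sumr -sumrN -big_split /=; apply: ler_sum => i _.
  have := sqr_ge0 (t * u i + v i); nra.
have := sqr_sqrtr hA; have := sqr_sqrtr hB.
have := sqrtr_ge0 (\sum_i u i ^+ 2); have := sqrtr_ge0 (\sum_i v i ^+ 2).
move: h1 h2; set S := \sum_i u i * v i; set a := Num.sqrt _; set b := Num.sqrt _.
move=> h1 h2 b0 a0 eb ea; rewrite -ea -eb -exprMn.
have p0 : 0 <= a * b by rewrite mulr_ge0.
nra.
Qed.

Lemma rb_frob m p (A : 'M[R]_(m, p)) : rb A (frobnorm A).
Proof.
move=> a; rewrite /frobnorm sqr_sqrtr; last first.
  by apply: sumr_ge0 => i _; apply: sumr_ge0 => j _; apply: sqr_ge0.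
rewrite /rn mulr_suml; apply: ler_sum => i _; rewrite mxE.
exact: real_CS (fun j => A i j) (fun j => a j 0).
Qed.

Lemma frobT m p (A : 'M[R]_(m, p)) : frobnorm A^T = frobnorm A.
Proof.
by rewrite /frobnorm exchange_big; congr Num.sqrt; apply: eq_bigr => i _; apply: eq_bigr => j _; rewrite mxE.
Qed.

Lemma frob_ge0 m p (A : 'M[R]_(m, p)) : 0 <= frobnorm A.
Proof. exact: sqrtr_ge0. Qed.


Lemma bnd_diag m (d : 'rV[C]_m) M : 0 <= M -> (forall i, cabs (d 0 i) <= M) ->
  bnd (diag_mx d) M.
Proof.
move=> M0 hd; apply: bnd_nsq => // x; rewrite mul_diag_mx /nsq mulr_sumr.
apply: ler_sum => i _; rewrite !mxE ReM ImM.
have : cabs (d 0 i) ^+ 2 <= M ^+ 2 by rewrite ler_pXn2r ?nnegrE ?cabs_ge0 ?hd. rewrite cabs_sq.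
set a := Re (d 0 i); set b := Im (d 0 i); set u := Re (x i 0); set v := Im (x i 0).
move=> h.
have -> : (a * u - b * v) ^+ 2 + (a * v + b * u) ^+ 2 = (a ^+ 2 + b ^+ 2) * (u ^+ 2 + v ^+ 2) by ring.
by apply: ler_wpM2r => //; rewrite addr_ge0 ?sqr_ge0.
Qed.

Lemma nsq_eq0 m (x : 'cV[C]_m) : nsq x = 0 -> x = 0.
Proof.
move=> h; apply/matrixP => i j; rewrite (ord1 j) mxE.
have H0 : forall l, Re (x l 0) ^+ 2 + Im (x l 0) ^+ 2 = 0.
  move=> l; apply/eqP; rewrite eq_le addr_ge0 ?sqr_ge0 // andbT -h /nsq.
  by rewrite (bigD1 l) //= lerDl sumr_ge0 // => l' _; rewrite addr_ge0 ?sqr_ge0.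
move/eqP: (H0 i); rewrite paddr_eq0 ?sqr_ge0 // !sqrf_eq0 => /andP[/eqP h1 /eqP h2].
by apply: cE.
Qed.

Lemma rdotD m (x y z : 'cV[C]_m) : rdot x (y + z) = rdot x y + rdot x z.
Proof.
rewrite /rdot -big_split /=; apply: eq_bigr => i _; rewrite !mxE ReD ImD; ring.
Qed.

Lemma rdot0 m (x : 'cV[C]_m) : rdot x 0 = 0.
Proof. by rewrite /rdot big1 // => i _; rewrite mxE mulr0 mulr0 addr0. Qed.

Lemma inv_bnd m (A : 'M[C]_m) gamma : 0 < gamma ->
  (forall x, gamma^-1 * nsq x <= rdot x (A *m x)) ->
  A \in unitmx /\ bnd (invmx A) gamma.
Proof.
move=> g0 hA.
have key : forall x, gamma^-1 * vnorm x ^+ 2 <= vnorm x * vnorm (A *m x).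
  by move=> x; rewrite vnorm_sq; apply: le_trans (hA x) (CS _ _).
have unitA : A \in unitmx.
  rewrite unitmxE unitfE; apply/negP => /eqP hdet.
  have : \det A^T == 0 by rewrite det_tr hdet.
  case/det0P => v vn0 vA.
  have Av : A *m v^T = 0 by rewrite -[A]trmxK -trmx_mul vA linear0.
  have := hA v^T; rewrite Av rdot0 pmulr_rle0 ?invr_gt0 // => hn.
  have : nsq v^T = 0 by apply/eqP; rewrite eq_le hn nsq_ge0.
  move/nsq_eq0 => /(congr1 trmx); rewrite trmxK linear0 => v0.
  by rewrite v0 eqxx in vn0.
split => // y.
have := key (invmx A *m y); rewrite mulmxA mulmxV // mul1mx.
have := vnorm_ge0 (invmx A *m y); have := vnorm_ge0 y.
set X := vnorm (invmx A *m y); set Y := vnorm y => Y0 X0 h.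
have gg : gamma * gamma^-1 = 1 by rewrite mulfV // gt_eqF.
have [X_eq0|X_pos] := eqVneq X 0.
  by rewrite X_eq0 mulr_ge0 // ltW.
have Xp : 0 < X by rewrite lt_def X_pos X0.
have h2 : X ^+ 2 <= gamma * (X * Y).
  by rewrite -[X ^+ 2]mul1r -gg -mulrA ler_wpM2l // ltW.
have : X * X <= X * (gamma * Y) by rewrite mulrCA -expr2.
by rewrite ler_pM2l.
Qed.

Definition rdt m (a b : 'cV[R]_m) : R := (a^T *m b) 0 0.

Lemma rdot_split m (x y : 'cV[C]_m) : rdot x y = rdt (re_v x) (re_v y) + rdt (im_v x) (im_v y).
Proof.
rewrite /rdot /rdt !mxE -big_split /=; apply: eq_bigr => i _; rewrite !mxE //.
Qed.

Lemma rdot_map m p (B : 'M[R]_(m, p)) x y : rdot x (mapC B *m y) = rdot (mapC B^T *m x) y.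
Proof.
rewrite !rdot_split !re_map !im_map /rdt !trmx_mul !trmxK !mulmxA //.
Qed.

Lemma rn_orth m p (V : 'M[R]_(m, p)) a : V^T *m V = 1%:M -> rn (V *m a) = rn a.
Proof. by move=> VV; rewrite !rnE trmx_mul -!mulmxA (mulmxA V^T) VV mul1mx. Qed.

Lemma nsq_orth m p (V : 'M[R]_(m, p)) x : V^T *m V = 1%:M -> nsq (mapC V *m x) = nsq x.
Proof. by move=> VV; rewrite !nsq_split re_map im_map !rn_orth. Qed.

Lemma rdot_diag m (d : 'rV[C]_m) y : rdot y (diag_mx d *m y) =
  \sum_i Re (d 0 i) * (Re (y i 0) ^+ 2 + Im (y i 0) ^+ 2).
Proof.
rewrite mul_diag_mx /rdot; apply: eq_bigr => i _; rewrite !mxE ReM ImM; ring.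
Qed.

Lemma coercive k n (W : 'M[R]_(n, k)) (d : 'rV[C]_n) (fr : R) (L : 'M[R]_k) gamma :
  0 < gamma -> W^T *m W = 1%:M -> (forall i, gamma^-1 <= Re (d 0 i)) -> 0 <= fr ->
  (forall x : 'cV[R]_k, 0 <= (x^T *m L *m x) 0 0) ->
  forall x, gamma^-1 * nsq x <=
    rdot x ((((mapC W)^T *m diag_mx d *m mapC W) + fr%:C *: mapC L) *m x).
Proof.
move=> g0 WW hd f0 hL x.
rewrite mulmxDl rdotD -!mulmxA (matrix.map_trmx (real_complex R) W) rdot_map trmxK rdot_diag.
have h1 : gamma^-1 * nsq x <= \sum_i Re (d 0 i) * (Re ((mapC W *m x) i 0) ^+ 2 + Im ((mapC W *m x) i 0) ^+ 2).
  rewrite -(nsq_orth x WW) /nsq mulr_sumr; apply: ler_sum => i _.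
  by apply: ler_wpM2r => //; rewrite addr_ge0 ?sqr_ge0.
apply: le_trans h1 _; rewrite lerDl.
have -> : rdot x ((fr%:C *: mapC L) *m x) = fr * rdot x (mapC L *m x).
  rewrite -scalemxAl /rdot mulr_sumr; apply: eq_bigr => i _.
  rewrite !mxE ReM ImM ReC ImC; ring.
apply: mulr_ge0 => //; rewrite rdot_split re_map im_map /rdt.
by rewrite addr_ge0 // mulmxA hL.
Qed.

End S.

Section S2.
Local Open Scope complex_scope.
Variable R : realType.
Local Notation C := R[i].
Local Notation Re := (@complex.Re R).
Local Notation Im := (@complex.Im R).

Lemma peval_poly (p : {poly R}) (w : R) :
  exists pr pi : {poly R}, forall e, peval p (Complex e w) = Complex pr.[e] pi.[e].
Proof.
elim/poly_ind: p => [|q c [qr [qi IH]]].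
  by exists 0, 0 => e; rewrite /peval map_poly0 !horner0.
exists (qr * 'X - qi * w%:P + c%:P), (qr * w%:P + qi * 'X) => e.
rewrite /peval rmorphD rmorphM /= map_polyX map_polyC hornerD hornerM hornerX hornerC.
rewrite -/(peval q _) IH.
by apply: cE; rewrite ?ReD ?ImD ?ReM ?ImM /= !hornerE.
Qed.

Lemma poly_neg_near (q : {poly R}) : q.[0] < 0 ->
  exists2 d, 0 < d & forall e, 0 < e -> e < d -> q.[e] < 0.
Proof.
move=> q0; have [d d0 hd] := @poly_cont R 0 q (- q.[0]) ltac:(by rewrite oppr_gt0).
exists d => // e e0 ed.
have := hd e; rewrite subr0 gtr0_norm // => /(_ ed) h.
have := ler_norm (q.[e] - q.[0]); lra.
Qed.

Lemma poly_nonneg0 (q : {poly R}) : (forall e, 0 < e -> 0 <= q.[e]) -> 0 <= q.[0].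
Proof.
move=> h; rewrite leNgt; apply/negP => /poly_neg_near [d d0 hd].
have d2 : 0 < d / 2 by rewrite divr_gt0.
have := hd (d / 2) d2 ltac:(lra); have := h _ d2; lra.
Qed.

Lemma complex_eq0 (a b : R) : Complex a b = 0 -> a ^+ 2 + b ^+ 2 = 0.
Proof. by case => -> ->; rewrite expr0n /= addr0. Qed.

Lemma sumsq_eq0 (a b : R) : a ^+ 2 + b ^+ 2 = 0 -> Complex a b = 0.
Proof.
move/eqP; rewrite paddr_eq0 ?sqr_ge0 // !sqrf_eq0 => /andP[/eqP -> /eqP ->] //.
Qed.

Lemma nonroot_near (d : {poly R}) (w dl : R) : d != 0 -> 0 < dl ->
  exists e, [/\ 0 < e, e < dl & peval d (Complex e w) != 0].
Proof.
move=> dn0 dl0.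
pose D := (map_poly (real_complex R) d) \Po ('X + (jw w)%:P).
have sD : size D = size d by rewrite size_comp_poly2 ?size_XaddC // size_map_poly.
have DE : forall e, D.[e%:C] = peval d (Complex e w).
  move=> e; rewrite horner_comp !hornerE /peval; congr (_.[_]).
  by apply: cE; rewrite ?ReD ?ImD /= ?addr0 ?add0r.
have Dn0 : D != 0 by rewrite -size_poly_eq0 sD size_poly_eq0.
pose N := size D.
pose c := dl / (N.+1)%:R.
have c0 : 0 < c by rewrite divr_gt0 // ltr0Sn.
have hlt : forall i, (i < N)%N -> c * (i.+1)%:R < dl.
  move=> i iN; rewrite /c -[ltRHS](@divfK _ (N.+1)%:R) ?pnatr_eq0 //.
  rewrite ltr_pM2l ?ltr_nat ?ltnS //.
have hgt : forall i, 0 < c * (i.+1)%:R by move=> i; rewrite mulr_gt0 // ltr0Sn.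
apply/not_existsP => hne.
have hroot : forall i, (i < N)%N -> peval d (Complex (c * (i.+1)%:R) w) = 0.
  move=> i iN; apply/eqP; apply/negPn/negP => hn; apply: (hne (c * (i.+1)%:R)).
  by split => //; apply: hlt.
pose rs := [seq (c * (i.+1)%:R)%:C | i <- iota 0 N].
have := @max_poly_roots _ D rs Dn0.
have -> : all (root D) rs.
  rewrite /rs all_map; apply/allP => i; rewrite mem_iota add0n => /andP[_ iN].
  by rewrite /= /root DE hroot.
have -> : uniq rs.
  rewrite map_inj_uniq ?iota_uniq // => i j /(congr1 (@complex.Re R)) /=.
  by move/(mulfI (ltac:(by rewrite gt_eqF) : c != 0)) => /eqP; rewrite eqr_nat => /eqP [].
by rewrite size_map size_iota ltnn => /(_ isT isT).
Qed.


Lemma Re_div (a b c d : R) : Re (Complex a b / Complex c d) = (a * c + b * d) / (c ^+ 2 + d ^+ 2).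
Proof. rewrite ReM ReV ImV /=; ring. Qed.

Lemma cabs_div (a b c d : R) : c ^+ 2 + d ^+ 2 != 0 ->
  cabs (Complex a b / Complex c d) ^+ 2 = (a ^+ 2 + b ^+ 2) / (c ^+ 2 + d ^+ 2).
Proof. move=> nz; rewrite cabs_sq ReM ImM ReV ImV /=; field; exact: nz. Qed.

Lemma sumsq_ge0 (a b : R) : 0 <= a ^+ 2 + b ^+ 2.
Proof. by rewrite addr_ge0 ?sqr_ge0. Qed.

Lemma g_boundary (g : ratfun R) gamma w : den g != 0 -> 0 < gamma ->
  (forall s : C, 0 < Re s -> cabs (reval g s) ^+ 2 / gamma <= Re (reval g s)) ->
  peval (num g) (jw w) != 0 -> gamma^-1 <= Re (rinv_eval g (jw w)).
Proof.
move=> dn0 g0 H nn0.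
have [nr [ni hn]] := peval_poly (num g) w.
have [dr [di hd]] := peval_poly (den g) w.
pose h := gamma%:P * (nr * dr + ni * di) - (nr ^+ 2 + ni ^+ 2).
have Hpos : forall e, 0 < e -> peval (den g) (Complex e w) != 0 -> 0 <= h.[e].
  move=> e e0; rewrite hd => nz.
  have nz' : dr.[e] ^+ 2 + di.[e] ^+ 2 != 0.
    by apply: contra nz => /eqP /sumsq_eq0 ->.
  have Np : 0 < dr.[e] ^+ 2 + di.[e] ^+ 2 by rewrite lt_def nz' sumsq_ge0.
  have := H (Complex e w) e0; rewrite /reval hn hd cabs_div // Re_div.
  rewrite /h !hornerE.
  move: Np nz'; set N := dr.[e] ^+ 2 + di.[e] ^+ 2 => Np nz'.
  set A := nr.[e] ^+ 2 + ni.[e] ^+ 2; set B := nr.[e] * dr.[e] + ni.[e] * di.[e].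
  move=> hh; have NG : 0 < N * gamma by rewrite mulr_gt0.
  move: hh; rewrite -(ler_pM2r NG).
  have -> : A / N / gamma * (N * gamma) = A by field; rewrite gt_eqF.
  have -> : B / N * (N * gamma) = gamma * B by field.
  rewrite subr_ge0 //.
have h0 : 0 <= h.[0].
  rewrite leNgt; apply/negP => /poly_neg_near [dl dl0 hdl].
  have [e [e0 edl ne]] := nonroot_near w dn0 dl0.
  by have := hdl e e0 edl; have := Hpos e e0 ne; lra.
have jwE : jw w = Complex 0 w by [].
move: nn0; rewrite /rinv_eval jwE hn hd Re_div => nn0.
have nz : nr.[0] ^+ 2 + ni.[0] ^+ 2 != 0.
  by apply: contra nn0 => /eqP /sumsq_eq0 ->.
move: h0; rewrite /h !hornerE => h0.
rewrite -subr_ge0.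
have -> : (dr.[0] * nr.[0] + di.[0] * ni.[0]) / (nr.[0] ^+ 2 + ni.[0] ^+ 2) - gamma^-1
   = (gamma * (nr.[0] * dr.[0] + ni.[0] * di.[0]) - (nr.[0] ^+ 2 + ni.[0] ^+ 2))
      / (gamma * (nr.[0] ^+ 2 + ni.[0] ^+ 2)).
  by field; rewrite nz gt_eqF.
by rewrite divr_ge0 // mulr_ge0 ?sumsq_ge0 // ltW.
Qed.

Lemma f_boundary (f : ratfun R) w :
  (forall s : C, 0 < Re s -> 0 < Re (reval f s)) -> 0 <= Re (reval f (jw w)).
Proof.
move=> H.
have [nr [ni hn]] := peval_poly (num f) w.
have [dr [di hd]] := peval_poly (den f) w.
pose Q := nr * dr + ni * di.
have Hq : forall e, 0 < e -> 0 <= Q.[e].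
  move=> e e0; have := H (Complex e w) e0; rewrite /reval hn hd Re_div /Q !hornerE.
  move=> hh; rewrite leNgt; apply/negP => qn.
  have : (nr.[e] * dr.[e] + ni.[e] * di.[e]) / (dr.[e] ^+ 2 + di.[e] ^+ 2) <= 0.
    by rewrite mulr_le0_ge0 ?invr_ge0 ?sumsq_ge0 // ltW.
  lra.
have := poly_nonneg0 Hq; rewrite /Q !hornerE => h0.
have jwE : jw w = Complex 0 w by [].
by rewrite /reval jwE hn hd Re_div divr_ge0 ?sumsq_ge0.
Qed.

End S2.

Section Id2.
Local Open Scope complex_scope.
Variable R : realType.
Local Notation C := R[i].

Lemma ident1 k (A B : 'M[C]_k) : A \in unitmx -> B \in unitmx ->
  invmx A - invmx B = invmx B *m (B - A) *m invmx A.
Proof.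
move=> uA uB; rewrite mulmxBr mulmxBl mulVmx // mul1mx -mulmxA mulmxV // mulmx1 //.
Qed.

Lemma ident2 n k (Vc Uc : 'M[C]_(n, k)) (D : 'M[C]_n) (F : 'M[C]_k) :
  (Vc^T *m D *m Vc + F) - (Uc^T *m D *m Uc + F)
  = (Vc - Uc)^T *m D *m Uc + Vc^T *m D *m (Vc - Uc).
Proof.
rewrite [(Vc - Uc)^T]raddfB /= !mulmxBl mulmxBr.
rewrite opprD addrACA subrr addr0.
by rewrite [RHS]addrC addrA subrK.
Qed.

Lemma ident3 n k (Vc Uc : 'M[C]_(n, k)) (Ai Bi : 'M[C]_k) :
  Vc *m Ai *m Vc^T - Uc *m Bi *m Uc^T
  = (Vc - Uc) *m Ai *m Vc^T + Uc *m (Ai - Bi) *m Vc^T + Uc *m Bi *m (Vc - Uc)^T.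
Proof.
rewrite [(Vc - Uc)^T]raddfB /= !mulmxBl !mulmxBr !mulmxBl.
by rewrite !addrA subrK subrK.
Qed.
End Id2.

Theorem lemma6 (R : realType) (n k : nat) (g : 'I_n -> ratfun R) (f : ratfun R)
    (gamma : R) (V Vh : 'M[R]_(n, k)) (L : 'M[R]_k) :
  (forall i, wf_ratfun (g i)) -> wf_ratfun f ->
  0 < gamma ->
  (forall (i : 'I_n) (s : R[i]), 0 < complex.Re s ->
     cabs (reval (g i) s) ^+ 2 / gamma <= complex.Re (reval (g i) s)) ->
  (forall s : R[i], 0 < complex.Re s -> 0 < complex.Re (reval f s)) ->
  (forall s : R[i], complex.Re s = 0 -> complex.Im (reval f s) = 0) ->
  M_finite g ->
  V^T *m V = 1%:M -> Vh^T *m Vh = 1%:M ->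
  L^T = L -> (forall x : 'cV[R]_k, 0 <= (x^T *m L *m x) 0 0) ->
  forall eta : R, 0 < eta ->
  forall w : R, `|w| < eta ->
    specnorm (Tmat g f V L (jw w) - Tmat g f Vh L (jw w))
      <= 2 * (gamma + gamma ^+ 2 * Mval g eta) * frobnorm (V - Vh).
Proof.
move=> wfg wff g0 Hg Hf Hfi Mfin VV UU LT Lpsd eta eta0 w weta.
set s := jw w.
pose d : 'rV[R[i]]_n := \row_i rinv_eval (g i) s.
have [B HB] := Mfin eta eta0.
have hd : forall i, gamma^-1 <= complex.Re (d 0 i).
  move=> i; rewrite mxE; apply: g_boundary (wfg i).1 g0 (Hg i) _.
  exact: (HB i w weta).1.
set M := Mval g eta.
have hub : has_ubound [set cabs (rinv_eval (g iw.1) (jw iw.2))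
         | iw in [set iw : 'I_n * R | `|iw.2| < eta]]%classic.
  by exists B => _ [[i w'] /= hw <-]; exact: (HB i w' hw).2.
have hM : forall i, cabs (d 0 i) <= M.
  by move=> i; rewrite mxE; apply: (ub_le_sup hub); exists (i, w).
have M0 : 0 <= M.
  case: (posnP n) => [n0|npos].
    rewrite /M /Mval.
    have -> : [set cabs (rinv_eval (g iw.1) (jw iw.2))
         | iw in [set iw : 'I_n * R | `|iw.2| < eta]]%classic = set0.
      by apply/seteqP; split => // x [[i w'] _ _]; have := ltn_ord i; rewrite {2}n0.
    by rewrite sup0.
  exact: le_trans (cabs_ge0 _) (hM (Ordinal npos)).
pose fr := complex.Re (reval f s).
have fE : reval f s = (fr%:C)%C by apply: cE => //; rewrite Hfi.
have f0 : 0 <= fr := f_boundary w Hf.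
have inv : forall W : 'M[R]_(n, k), W^T *m W = 1%:M ->
   let A := (map_mx (real_complex R) W)^T *m diag_mx d *m map_mx (real_complex R) W
            + reval f s *: map_mx (real_complex R) L in
   A \in unitmx /\ bnd (invmx A) gamma.
  move=> W WW /=; apply: inv_bnd => //; rewrite fE.
  exact: coercive.
set Vc := map_mx (real_complex R) V; set Uc := map_mx (real_complex R) Vh.
set F := reval f s *: map_mx (real_complex R) L.
set D := diag_mx d.
have [uA bA] := inv V VV; have [uB bB] := inv Vh UU.
set A := Vc^T *m D *m Vc + F in uA bA.
set Bm := Uc^T *m D *m Uc + F in uB bB.
have -> : Tmat g f V L s = Vc *m invmx A *m Vc^T by [].
have -> : Tmat g f Vh L s = Uc *m invmx Bm *m Uc^T by [].
rewrite ident3 ident1 //.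
set Fr := frobnorm (V - Vh).
have Fr0 : 0 <= Fr := frob_ge0 _.
have bE : bnd (Vc - Uc) Fr.
  by rewrite /Vc /Uc -map_mxB; apply: rb_bnd => //; apply: rb_frob.
have bET : bnd (Vc - Uc)^T Fr.
  rewrite /Vc /Uc -map_mxB matrix.map_trmx /Fr -frobT.
  by apply: rb_bnd; rewrite ?frob_ge0 //; apply: rb_frob.
have bV : bnd Uc 1 by apply: rb_bnd => //; apply: rb_orth.
have bVT : bnd Vc^T 1.
  by rewrite /Vc matrix.map_trmx; apply: rb_bnd => //; apply: rb_orthT.
have bVT' : bnd Vc^T 1 := bVT.
have bD : bnd D M by apply: bnd_diag.
have g0' : 0 <= gamma := ltW g0.
apply: bnd_spec; first by rewrite !mulr_ge0 // ?addr_ge0 ?mulr_ge0 ?exprn_ge0.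
have bBA : bnd (Bm - A) (Fr * M * 1 + 1 * M * Fr).
  rewrite -opprB /A /Bm ident2; apply: bndN.
  apply: bndD; (apply: bndM; [|apply: bndM|]) => //; rewrite ?mulr_ge0 //.
apply: (bnd_eq _ (bndD (bndD (bndM _ (bndM _ bE bA) bVT)
   (bndM _ (bndM _ bV (bndM _ (bndM _ bB bBA) bA)) bVT))
   (bndM _ (bndM _ bV bB) bET))).
all: rewrite ?mulr_ge0 ?addr_ge0 ?mulr_ge0 //.
ring.
Qed.
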